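(* Let $n\geq1$ be an integer and let $\lambda,\lambda_1\in\mathbb{C}$ with $0<|\lambda_1|<|\lambda|<1$. Let $Q\in\mathcal{H}[1,n]$ satisfy $Q(z)\prec 1+\lambda_1 z$ $(z\in\mathbb{U})$. (1) Assume $|\lambda|^2+|\lambda_1|^2\leq 1$, and define $$\alpha_0=\begin{cases}\dfrac{1-|\lambda|}{1+|\lambda_1|}, & \text{if } 0<|\lambda|+|\lambda_1|\leq 1,\\[2mm] \dfrac{1-(|\lambda|^2+|\lambda_1|^2)}{2(1-|\lambda_1|^2)}, & \text{if } |\lambda|^2+|\lambda_1|^2\leq 1\leq |\lambda|+|\lambda_1|.\end{cases}$$ If $p\in\mathcal{H}[1,n]$ and $\alpha$ is a real number with $\alpha\leq\alpha_0$ such that $$Q(z)\,[\alpha+(1-\alpha)p(z)]\prec 1+\lambda z\qquad(z\in\mathbb{U}),$$ then $\operatorname{Re}(p(z))>0$ for all $z\in\mathbb{U}$. (2) Assume $|\lambda|+2|\lambda_1|\leq 1$. If $w\in\mathcal{H}[0,n]$ and $$Q(z)\,[1+w(z)]\prec 1+\lambda z\qquad (z\in\mathbb{U}),$$ then $$|w(z)|<\frac{|\lambda|+|\lambda_1|}{1-|\lambda_1|}\leq 1\qquad(z\in\mathbb{U}).$$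
   Context: $\mathbb{U}=\{z\in\mathbb{C}:|z|<1\}$. For $a_0\in\mathbb{C}$ and an integer $n\geq1$, $\mathcal{H}[a_0,n]$ denotes the class of functions analytic in $\mathbb{U}$ of the form $p(z)=a_0+\sum_{k=n}^\infty a_k z^k$. For $f,g$ analytic in $\mathbb{U}$, $f\prec g$ ($f$ is subordinate to $g$) means there is an analytic $w$ in $\mathbb{U}$ with $w(0)=0$, $|w(z)|<1$ on $\mathbb{U}$, and $f(z)=g(w(z))$; for $\lambda\neq0$, $q\prec 1+\lambda z$ means $q(0)=1$ and $|q(z)-1|<|\lambda|$ on $\mathbb{U}$. *)

(* Defs.v *)
From Stdlib Require Import Reals.
Open Scope R_scope.

Record Cx : Type := mkC { Re : R ; Im : R }.

Definition C0 : Cx := mkC 0 0.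
Definition C1 : Cx := mkC 1 0.
Definition RtoC (x : R) : Cx := mkC x 0.
Definition Cadd (u v : Cx) : Cx := mkC (Re u + Re v) (Im u + Im v).
Definition Copp (u : Cx) : Cx := mkC (- Re u) (- Im u).
Definition Csub (u v : Cx) : Cx := Cadd u (Copp v).
Definition Cmul (u v : Cx) : Cx :=
  mkC (Re u * Re v - Im u * Im v) (Re u * Im v + Im u * Re v).
Fixpoint Cpow (u : Cx) (k : nat) : Cx :=
  match k with O => C1 | S k' => Cmul u (Cpow u k') end.
Definition Cnorm (u : Cx) : R := sqrt (Re u * Re u + Im u * Im u).

Fixpoint psum (a : nat -> Cx) (z : Cx) (N : nat) : Cx :=
  match N with
  | O => a O
  | S N' => Cadd (psum a z N') (Cmul (a N) (Cpow z N))
  end.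

Definition series_to (a : nat -> Cx) (z l : Cx) : Prop :=
  forall eps : R, eps > 0 -> exists N0 : nat,
    forall N : nat, (N >= N0)%nat -> Cnorm (Csub (psum a z N) l) < eps.

Definition inU (z : Cx) : Prop := Cnorm z < 1.

(* f is analytic in U: f is given on U by a power series centered at 0
   (equivalent to holomorphy on U, since U is a disk centered at 0) *)
Definition analytic_U (f : Cx -> Cx) : Prop :=
  exists a : nat -> Cx, forall z, inU z -> series_to a z (f z).

Definition inH (a0 : Cx) (n : nat) (f : Cx -> Cx) : Prop :=
  exists a : nat -> Cx,
    a O = a0 /\ (forall k, (1 <= k)%nat -> (k < n)%nat -> a k = C0) /\
    (forall z, inU z -> series_to a z (f z)).

Definition subord (f g : Cx -> Cx) : Prop :=
  exists w : Cx -> Cx, analytic_U w /\ w C0 = C0 /\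
    (forall z, inU z -> Cnorm (w z) < 1) /\
    (forall z, inU z -> f z = g (w z)).

Definition lin (lam : Cx) : Cx -> Cx := fun z => Cadd C1 (Cmul lam z).

(* alpha_0 (both cases agree when |lam|+|lam1| = 1) *)
Definition alpha0 (l l1 : R) : R :=
  if Rle_dec (l + l1) 1 then (1 - l) / (1 + l1)
  else (1 - (l ^ 2 + l1 ^ 2)) / (2 * (1 - l1 ^ 2)).

(* Main.v *)
Require Import Defs.
From Stdlib Require Import Reals Lra Psatz.
Require Import Defs.
Open Scope R_scope.

Lemma sqrt_lt_sq (A c : R) : 0 <= A -> sqrt A < c -> A < c ^ 2.
Proof.
  intros HA H. pose proof (sqrt_sqrt A HA). pose proof (sqrt_pos A). nra.
Qed.

Lemma N_nonneg (u : Cx) : 0 <= Re u * Re u + Im u * Im u.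
Proof. nra. Qed.

Lemma Cnorm_lt (u : Cx) (c : R) : Cnorm u < c -> Re u * Re u + Im u * Im u < c ^ 2.
Proof. intro H. apply sqrt_lt_sq; [apply N_nonneg | exact H]. Qed.

Lemma Cnorm_mul (u v : Cx) : Cnorm (Cmul u v) = Cnorm u * Cnorm v.
Proof.
  unfold Cnorm. rewrite <- sqrt_mult by apply N_nonneg. f_equal. simpl. ring.
Qed.

Lemma Cnorm_pos (u : Cx) : 0 <= Cnorm u.
Proof. apply sqrt_pos. Qed.

Lemma Cnorm_add (u v : Cx) : Cnorm (Cadd u v) <= Cnorm u + Cnorm v.
Proof.
  unfold Cnorm. destruct u as [a b], v as [c d]. simpl.
  set (Nu := a*a+b*b). set (Nv := c*c+d*d).
  assert (HNu : 0 <= Nu) by (unfold Nu; nra).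
  assert (HNv : 0 <= Nv) by (unfold Nv; nra).
  pose proof (sqrt_pos Nu). pose proof (sqrt_pos Nv).
  pose proof (sqrt_sqrt Nu HNu). pose proof (sqrt_sqrt Nv HNv).
  assert (Hd : a*c+b*d <= sqrt Nu * sqrt Nv).
  { destruct (Rle_dec (a*c+b*d) 0). nra.
    rewrite <- (sqrt_mult Nu Nv HNu HNv).
    rewrite <- (sqrt_square (a*c+b*d)); [|lra].
    apply sqrt_le_1_alt. unfold Nu, Nv. pose proof (pow2_ge_0 (a*d-b*c)). nra. }
  rewrite <- (sqrt_square (sqrt Nu + sqrt Nv)); [|lra].
  apply sqrt_le_1_alt. unfold Nu, Nv in *. nra.
Qed.

Lemma Cnorm_opp (u : Cx) : Cnorm (Copp u) = Cnorm u.
Proof. unfold Cnorm; simpl; f_equal; ring. Qed.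

Lemma Cnorm_C1 : Cnorm C1 = 1.
Proof. unfold Cnorm; simpl. replace (1*1+0*0) with 1 by ring. apply sqrt_1. Qed.

Lemma key (dr di x y er ei l l1 : R) : 0 < l1 -> l1 < l -> l < 1 ->
  dr*dr + di*di < l1^2 -> er*er+ei*ei < l^2 ->
  (1+dr)*x - di*y = 1+er -> (1+dr)*y + di*x = ei -> x > alpha0 l l1.
Proof.
  intros H1 H2 H3 Hd He E1 E2.
  assert (Hl1sq : l1^2 < 1) by nra.
  assert (Hdr : dr*dr < 1) by nra.
  assert (Hdr2 : -1 < dr) by nra.
  set (a := 1+dr) in *. set (b := di) in *.
  assert (Hapos : 0 < a) by (unfold a; lra).
  set (s := sqrt (a*a+b*b)).
  assert (Hs2 : s*s = a*a+b*b) by (apply sqrt_sqrt; nra).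
  assert (Hs0 : 0 <= s) by apply sqrt_pos.
  assert (Has : a <= s) by nra.
  assert (Hspos : 0 < s) by nra.
  assert (Hsq : (s-1)*(s-1) < l1*l1).
  { assert (s*s - 2*s + 1 <= s*s - 2*a + 1) by lra.
    assert (s*s - 2*a + 1 = dr*dr+b*b) by (rewrite Hs2; unfold a, b; ring).
    assert (l1^2 = l1*l1) by ring. lra. }
  assert (Hsl : s < 1 + l1).
  { destruct (Rlt_dec s (1+l1)) as [|Hn]; [assumption|].
    assert (l1 <= s-1) by lra. assert (l1*l1 <= (s-1)*(s-1)) by (apply Rmult_le_compat; lra). lra. }
  assert (Hxs : x * (s*s) = a + a*er + b*ei) by (rewrite Hs2; replace (a + a*er + b*ei) with (a*(1+er) + b*ei) by ring;
    rewrite <- E1, <- E2; ring).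
  assert (Hdot : a*er+b*ei > - (s*l)).
  { destruct (Rle_dec 0 (a*er+b*ei)). nra.
    assert ((a*er+b*ei)^2 <= (s*s)*(er*er+ei*ei)) by (rewrite Hs2; pose proof (pow2_ge_0 (a*ei-b*er)); nra).
    assert ((s*s)*(er*er+ei*ei) < (s*s)*l^2) by (apply Rmult_lt_compat_l; nra).
    assert ((a*er+b*ei)^2 < (s*l)^2) by (replace ((s*l)^2) with ((s*s)*l^2) by ring; lra).
    destruct (Rlt_dec (-(s*l)) (a*er+b*ei)) as [|Hn]; [lra|].
    assert (s*l <= -(a*er+b*ei)) by lra.
    assert ((s*l)*(s*l) <= (-(a*er+b*ei))*(-(a*er+b*ei))) by (apply Rmult_le_compat; nra).
    nra. }
  assert (Ha : a > (s*s+1-l1^2)/2) by (unfold a, b in *; nra).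
  assert (Hmain : x*(s*s) > (s*s+1-l1^2)/2 - s*l) by lra.
  unfold alpha0. destruct (Rle_dec (l+l1) 1).
  - assert (Hh : 0 <= (1+l1-s)*((1+l1)*(1-l1) + (1-l1-2*l)*s)).
    { apply Rmult_le_pos. lra.
      destruct (Rle_dec 0 (1-l1-2*l)); nra. }
    assert (Hq : (s*s+1-l1^2)/2 - s*l - s*s*((1-l)/(1+l1))
       = (1+l1-s)*((1+l1)*(1-l1) + (1-l1-2*l)*s) / (2*(1+l1))) by (field; lra).
    assert (0 <= (1+l1-s)*((1+l1)*(1-l1) + (1-l1-2*l)*s) / (2*(1+l1))).
    { unfold Rdiv; apply Rmult_le_pos; [lra| apply Rlt_le, Rinv_0_lt_compat; lra]. }
    assert (x*(s*s) > (s*s)*((1-l)/(1+l1))) by nra.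
    nra.
  - assert (Hq : (s*s+1-l1^2)/2 - s*l - s*s*((1-(l^2+l1^2))/(2*(1-l1^2)))
       = ((1-l1^2) - l*s)^2 / (2*(1-l1^2))) by (field; nra).
    assert (0 <= ((1-l1^2) - l*s)^2 / (2*(1-l1^2))).
    { unfold Rdiv; apply Rmult_le_pos; [apply pow2_ge_0| apply Rlt_le, Rinv_0_lt_compat; nra]. }
    assert (x*(s*s) > (s*s)*((1-(l^2+l1^2))/(2*(1-l1^2)))) by nra.
    nra.
Qed.

Lemma alpha0_lt1 l l1 : 0 < l1 -> l1 < l -> l < 1 -> alpha0 l l1 < 1.
Proof.
  intros. unfold alpha0. destruct (Rle_dec (l+l1) 1).
  - apply (Rmult_lt_reg_r (1+l1)); [lra|]. unfold Rdiv. rewrite Rmult_assoc, Rinv_l; lra.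
  - apply (Rmult_lt_reg_r (2*(1-l1^2))); [nra|]. unfold Rdiv. rewrite Rmult_assoc, Rinv_l; nra.
Qed.

Theorem lemma3 (n : nat) (lam lam1 : Cx) (Q : Cx -> Cx) :
  (1 <= n)%nat ->
  0 < Cnorm lam1 -> Cnorm lam1 < Cnorm lam -> Cnorm lam < 1 ->
  inH C1 n Q ->
  subord Q (lin lam1) ->
  (Cnorm lam ^ 2 + Cnorm lam1 ^ 2 <= 1 ->
   forall (p : Cx -> Cx) (alpha : R),
     inH C1 n p ->
     alpha <= alpha0 (Cnorm lam) (Cnorm lam1) ->
     subord (fun z => Cmul (Q z) (Cadd (RtoC alpha) (Cmul (RtoC (1 - alpha)) (p z))))
            (lin lam) ->
     forall z, inU z -> Re (p z) > 0)
  /\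
  (Cnorm lam + 2 * Cnorm lam1 <= 1 ->
   forall w : Cx -> Cx,
     inH C0 n w ->
     subord (fun z => Cmul (Q z) (Cadd C1 (w z))) (lin lam) ->
     forall z, inU z ->
       Cnorm (w z) < (Cnorm lam + Cnorm lam1) / (1 - Cnorm lam1) /\
       (Cnorm lam + Cnorm lam1) / (1 - Cnorm lam1) <= 1).
Proof.
  intros _ Hl1 Hll1 Hl _ [w1 [_ [_ [Hw1 HQ]]]].
  set (l := Cnorm lam) in *. set (l1 := Cnorm lam1) in *.
  split.
  - intros _ p alpha _ Hal [w2 [_ [_ [Hw2 H2]]]] z Hz.
    specialize (H2 z Hz). simpl in H2. rewrite (HQ z Hz) in H2.
    unfold lin in H2.
    assert (Hd : Cnorm (Cmul lam1 (w1 z)) < l1).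
    { rewrite Cnorm_mul. pose proof (Hw1 z Hz). pose proof (Cnorm_pos (w1 z)). fold l1. nra. }
    assert (He : Cnorm (Cmul lam (w2 z)) < l).
    { rewrite Cnorm_mul. pose proof (Hw2 z Hz). pose proof (Cnorm_pos (w2 z)). fold l. nra. }
    apply Cnorm_lt in Hd. apply Cnorm_lt in He.
    revert H2 Hd He.
    set (d := Cmul lam1 (w1 z)). set (e := Cmul lam (w2 z)).
    set (v := Cadd (RtoC alpha) (Cmul (RtoC (1 - alpha)) (p z))).
    intros H2 Hd He.
    assert (Hv : Re v = alpha + (1-alpha) * Re (p z)) by (unfold v; simpl; ring).
    assert (Hvi : Im v = (1-alpha) * Im (p z)) by (unfold v; simpl; ring).
    destruct d as [dr di]. destruct e as [er ei]. simpl in Hd, He.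
    pose proof (f_equal Re H2) as E1. pose proof (f_equal Im H2) as E2. simpl in E1, E2.
    assert (Hk : Re v > alpha0 l l1).
    { apply (key dr di (Re v) (Im v) er ei l l1); try lra; rewrite Hv, Hvi; lra. }
    pose proof (alpha0_lt1 l l1 Hl1 Hll1 Hl). nra.
  - intros Hc w _ [w2 [_ [_ [Hw2 H2]]]] z Hz.
    specialize (H2 z Hz). simpl in H2. rewrite (HQ z Hz) in H2.
    unfold lin in H2.
    assert (Hd : Cnorm (Cmul lam1 (w1 z)) < l1).
    { rewrite Cnorm_mul. pose proof (Hw1 z Hz). pose proof (Cnorm_pos (w1 z)). fold l1. nra. }
    assert (He : Cnorm (Cmul lam (w2 z)) < l).
    { rewrite Cnorm_mul. pose proof (Hw2 z Hz). pose proof (Cnorm_pos (w2 z)). fold l. nra. }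
    revert H2 Hd He.
    set (d := Cmul lam1 (w1 z)). set (e := Cmul lam (w2 z)). set (q := Cadd C1 d).
    intros H2 Hd He.
    assert (Eq1 : C1 = Cadd q (Copp d)).
    { unfold q; destruct d; unfold C1, Cadd, Copp; simpl; f_equal; ring. }
    assert (Eq2 : Cmul q (w z) = Cadd e (Copp d)).
    { revert H2. unfold q. destruct d, e, (w z). unfold C1, Cadd, Copp, Cmul; simpl.
      intro H. injection H; intros; f_equal; nra. }
    pose proof (Cnorm_add q (Copp d)) as T1. rewrite <- Eq1, Cnorm_C1, Cnorm_opp in T1.
    pose proof (Cnorm_add e (Copp d)) as T2. rewrite <- Eq2, Cnorm_mul, Cnorm_opp in T2.
    pose proof (Cnorm_pos (w z)). pose proof (Cnorm_pos q).
    assert (Hw : Cnorm (w z) * (1 - l1) < l + l1) by nra.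
    split.
    + apply (Rmult_lt_reg_r (1-l1)); [lra|]. unfold Rdiv. rewrite Rmult_assoc, Rinv_l; lra.
    + apply (Rmult_le_reg_r (1-l1)); [lra|]. unfold Rdiv. rewrite Rmult_assoc, Rinv_l; lra.
Qed.
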